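(* Let $\varphi$ be an Orlicz $N$-function with Young–Fenchel transform $\psi$. Let $\{X_{k,n},k\ge1,n\ge1\}$ be a double array of $\varphi$-subgaussian random variables, let $g$ be a positive non-decreasing function, set $a_{m,j}=g(\ln(mj))\psi^{-1}(\ln(mj))$, $Y_{m,j}=\max_{1\le k\le m,1\le n\le j}X_{k,n}-a_{m,j}$ and $Y^+_{m,j}=\max(Y_{m,j},0)$. Suppose there is a positive-valued function $f$ such that for all $m,j\ge1$, $1\le k\le m$, $1\le n\le j$, $$\frac{g(\ln(mj))}{\tau_\varphi(X_{k,n})}\ge f\left(\frac{mj}{kn}\right)\ge1,$$ and $f(x)\ge c_0>0$ for all $x\ge1$. Then for every $\alpha>2-c_0$, $$\sum_{m=1}^\infty\sum_{j=1}^\infty(mj)^{-\alpha}P(Y^+_{m,j}>0)<+\infty.$$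
   Context: An Orlicz $N$-function is a continuous even convex function $\varphi:\mathbb R\to\mathbb R$ with $\varphi(0)=0$, increasing on $(0,\infty)$, with $\varphi(x)/x\to0$ as $x\to0$ and $\varphi(x)/x\to+\infty$ as $x\to+\infty$. The Young–Fenchel transform is $\psi(x)=\sup_{y\in\mathbb R}(xy-\varphi(y))$; $\psi^{-1}$ is the inverse of $\psi$ on $[0,\infty)$. A random variable $X$ is $\varphi$-subgaussian if $EX=0$ and there is a finite $a>0$ with $E\exp(tX)\le\exp(\varphi(at))$ for all $t$; $\tau_\varphi(X)=\inf\{a>0:E\exp(tX)\le\exp(\varphi(at))\ \forall t\}$. *)

(* Defs.v *)
From HB Require Import structures.
From mathcomp Require Import all_boot all_order all_algebra.
From mathcomp Require Import all_classical all_reals all_analysis.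
Unset Printing Implicit Defensive.
Import Order.TTheory GRing.Theory Num.Theory.
Import numFieldNormedType.Exports.
Local Open Scope classical_set_scope.
Local Open Scope ring_scope.

Definition N_function {R : realType} (phi : R -> R) : Prop :=
  continuous phi /\
  (forall x, phi (- x) = phi x) /\
  (forall x y l, 0 <= l -> l <= 1 ->
     phi (l * x + (1 - l) * y) <= l * phi x + (1 - l) * phi y) /\
  phi 0 = 0 /\
  (forall x y, 0 < x -> x < y -> phi x < phi y) /\
  ((fun x => phi x / x) x @[x --> 0^'] --> 0) /\
  ((fun x => phi x / x) x @[x --> +oo] --> +oo).

Definition young_fenchel {R : realType} (phi : R -> R) (x : R) : R :=
  sup [set x * y - phi y | y in [set: R]].

Definition phi_subgaussian {R : realType} {d : measure_display}
  {T : measurableType d} (P : probability T R) (phi : R -> R)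
  (X : {RV P >-> R}) : Prop :=
  ('E_P[X] = 0)%E /\
  exists a : R, 0 < a /\
    forall t : R, (\int[P]_x (expR (t * X x))%:E <= (expR (phi (a * t)))%:E)%E.

Definition tau_phi {R : realType} {d : measure_display}
  {T : measurableType d} (P : probability T R) (phi : R -> R)
  (X : {RV P >-> R}) : R :=
  inf [set a : R | 0 < a /\
    forall t : R, (\int[P]_x (expR (t * X x))%:E <= (expR (phi (a * t)))%:E)%E].

Definition max_array {R : realType} {T : Type} (X : nat -> nat -> T -> R)
  (m j : nat) (x : T) : R :=
  \big[Num.max/X 1%N 1%N x]_(k < m) \big[Num.max/X 1%N 1%N x]_(n < j)
      X k.+1 n.+1 x.

(* Main.v *)
Require Import Defs.
From HB Require Import structures.
From mathcomp Require Import all_boot all_order all_algebra.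
From mathcomp Require Import all_classical all_reals all_analysis.
From mathcomp Require Import ring lra zify measurable_realfun.
Import Order.TTheory GRing.Theory Num.Theory.
Import numFieldNormedType.Exports.
Local Open Scope classical_set_scope.
Local Open Scope ring_scope.
Section PS.
Variable R : realType.

Lemma step_ineq (s : R) (k : nat) : 1 < s -> (1 <= k)%N ->
  expR (- s * ln k.+1%:R) * (s - 1) <=
  expR ((1 - s) * ln k%:R) - expR ((1 - s) * ln k.+1%:R).
Proof.
move=> s1 k1.
have k0 : 0 < k%:R :> R by rewrite ltr0n.
have k10 : 0 < k.+1%:R :> R by rewrite ltr0n.
pose q : R := ln k.+1%:R - ln k%:R.
have hq : 1 - q <= k%:R / k.+1%:R.
  have := expR_ge1Dx (- q).
  by rewrite /q opprB expRD expRN !lnK ?posrE.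
have hq2 : k.+1%:R^-1 <= q.
  have : k%:R / k.+1%:R = 1 - k.+1%:R^-1 :> R.
    rewrite -natr1; field; rewrite natr1 gt_eqF//.
  by move=> e; rewrite e lerD2l lerN2 in hq.
have e1 : expR ((1 - s) * ln k%:R) = expR ((1 - s) * ln k.+1%:R) * expR ((s - 1) * q).
  by rewrite -expRD /q; congr expR; ring.
have e2 : expR (- s * ln k.+1%:R) = expR ((1 - s) * ln k.+1%:R) / k.+1%:R.
  by rewrite -[X in _ / X](lnK (x:=k.+1%:R)) ?posrE// -expRN -expRD; congr expR; ring.
rewrite e1 e2.
set w := expR ((1 - s) * ln k.+1%:R).
have w0 : 0 < w by apply: expR_gt0.
have := expR_ge1Dx ((s - 1) * q).
move=> h.
have h2 : w * (1 + (s - 1) * q) <= w * expR ((s - 1) * q) by rewrite ler_pM2l.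
have h3 : (s - 1) * k.+1%:R^-1 <= (s - 1) * q by rewrite ler_pM2l ?subr_gt0.
have h4 : w * ((s - 1) * k.+1%:R^-1) <= w * ((s - 1) * q) by rewrite ler_pM2l.
have -> : w / k.+1%:R * (s - 1) = w * ((s - 1) * k.+1%:R^-1) by ring.
rewrite mulrDr mulr1 in h2; apply: (le_trans h4); rewrite lerBrDr addrC; exact: h2.
Qed.

Lemma psum_bound (s : R) (n : nat) : 1 < s ->
  (\sum_(1 <= i < n.+2) expR (- s * ln i%:R)) * (s - 1) <= s - expR ((1 - s) * ln n.+1%:R).
Proof.
move=> s1; elim: n => [|n IH].
  by rewrite big_nat1 ln1 !mulr0 expR0 mul1r; lra.
rewrite big_nat_recr //= mulrDl.
have := @step_ineq s n.+1 s1 isT.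
move: IH; set S := _ * (s - 1); set u := _ * (s - 1).
lra.
Qed.

Lemma pseries_fin (s : R) : 1 < s ->
  (\sum_(1 <= n <oo) (expR (- s * ln n%:R))%:E < +oo)%E.
Proof.
move=> s1.
apply: (@le_lt_trans _ _ (s / (s - 1))%:E); last by rewrite ltey.
apply: lime_le; first by apply: is_cvg_nneseries => n _ _; rewrite lee_fin expR_ge0.
apply: nearW => -[|[|n]].
- by rewrite big_geq // lee_fin divr_ge0 //; lra.
- by rewrite big_geq // lee_fin divr_ge0 //; lra.
rewrite sumEFin lee_fin ler_pdivlMr; last by lra.
have := psum_bound s n s1; have := expR_ge0 ((1 - s) * ln (n.+1%:R : R)).
set S := _ * (s - 1); lra.
Qed.
End PS.
Section Key.
Variables (R : realType) (d : measure_display) (T : measurableType d) (P : probability T R).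

Lemma mgf_le (phi : R -> R) (Xr : {RV P >-> R}) (a r : R) :
  (forall t : R, (\int[P]_x (expR (t * Xr x))%:E <= (expR (phi (a * t)))%:E)%E) ->
  ('M_P Xr r <= (expR (phi (a * r)))%:E)%E.
Proof.
move=> h; rewrite /mmt_gen_fun unlock.
have -> : (expR \o r \o* Xr) = (fun x => expR (r * Xr x)) by apply: funext => x /=; rewrite mulrC.
move: (h r). done.
Qed.

Lemma alg1 (K tau a' : R) : 0 <= K -> 0 < tau -> tau <= a' ->
  a' < tau + tau ^+ 2 / (2 * (K + 1)) -> K / tau - 1 / 2 <= K / a'.
Proof.
move=> K0 t0 ta al.
have a0 : 0 < a' by exact: (lt_le_trans t0 ta).
have h : (a' - tau) * (2 * (K + 1)) < tau ^+ 2.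
  by rewrite -ltr_pdivlMr; [lra | nra].
have h2 : 2 * K * (a' - tau) <= tau * a' by nra.
have e : K / tau - K / a' = (K * (a' - tau)) / (tau * a').
  by field; apply/andP; split; rewrite gt_eqF.
suff : K / tau - K / a' <= 1 / 2 by lra.
rewrite e ler_pdivrMr; last by nra.
lra.
Qed.

Lemma key (phi : R -> R) (Xr : {RV P >-> R}) (G v L F : R) :
  (forall x, 0 <= phi x) ->
  phi_subgaussian P phi Xr ->
  young_fenchel phi v = L -> 0 < L -> 0 <= v ->
  1 <= F -> F <= G / tau_phi P phi Xr -> 0 < G ->
  (P [set x | (G * v <= Xr x)%R] <= (expR (1 - F * L))%:E)%E.
Proof.
move=> phi0 [_ [a0 [a0pos ha0]]] yf L0 v0 F1 FG G0.
set S := [set a : R | 0 < a /\ forall t : R,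
  (\int[P]_x (expR (t * Xr x))%:E <= (expR (phi (a * t)))%:E)%E].
have tauE : tau_phi P phi Xr = inf S by [].
set tau := tau_phi P phi Xr in FG tauE.
have tau0 : 0 < tau.
  have : 0 < G / tau by apply: (lt_le_trans _ FG); lra.
  by rewrite pmulr_rgt0 // invr_gt0.
have F0 : 0 < F by lra.
pose eps := Num.min L 1 / (2 * F).
have m0 : 0 < Num.min L 1 by rewrite lt_min L0 ltr01.
have mL : Num.min L 1 <= L by rewrite ge_min lexx.
have m1 : Num.min L 1 <= 1 by rewrite ge_min lexx orbT.
have eps0 : 0 < eps by rewrite divr_gt0 // mulr_gt0.
have Feps : F * eps = Num.min L 1 / 2 by rewrite /eps; field; rewrite gt_eqF.
have epsL : eps < L.
  have : eps <= Num.min L 1 / 2.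
    rewrite /eps ler_pdivrMr ?mulr_gt0 //.
    have -> : Num.min L 1 / 2 * (2 * F) = Num.min L 1 * F by field.
    nra.
  lra.
have [z [y _ zE] hz] : exists2 z, [set v * y - phi y | y in [set: R]] z & L - eps < z.
  apply: sup_gt; first by exists (v * 0 - phi 0); exists 0.
  by move: yf; rewrite /young_fenchel => ->; lra.
rewrite -zE in hz.
have y0 : 0 < y.
  rewrite ltNge; apply/negP => hy.
  have : v * y <= 0 by rewrite mulr_ge0_le0.
  have := phi0 y; lra.
pose K := G * v * y.
have K0 : 0 <= K by rewrite /K mulr_ge0 // ?mulr_ge0 // ltW.
pose delta := tau ^+ 2 / (2 * (K + 1)).
have delta0 : 0 < delta by rewrite divr_gt0 ?exprn_gt0 // mulr_gt0 //; lra.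
have S0 : S !=set0 by exists a0; split.
have hlt : inf S < tau + delta by rewrite -tauE; lra.
have [a' Sa' a'lt] := inf_lt S0 hlt.
have taua' : tau <= a'.
  rewrite tauE; apply: ge_inf => //.
  by exists 0 => x [x0 _]; exact: ltW.
case: Sa' => a'0 ha'.
pose r := y / a'.
have r0 : 0 < r by rewrite divr_gt0.
have ch := chernoff Xr (G * v) r0.
have mg := @mgf_le phi Xr a' r ha'.
have ar : a' * r = y by rewrite /r; field; rewrite gt_eqF.
rewrite ar in mg.
apply: (le_trans ch).
apply: (le_trans (lee_pmul _ _ mg (lexx _))) => //.
  by rewrite /mmt_gen_fun unlock; apply: integral_ge0 => x _; rewrite lee_fin expR_ge0.
rewrite -EFinM lee_fin -expRD ler_expR.
have hK := @alg1 K tau a' K0 tau0 taua' a'lt.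
have e1 : r * (G * v) = K / a' by rewrite /r /K; field; rewrite gt_eqF.
rewrite e1.
have e2 : K / tau = (G / tau) * (v * y) by rewrite /K; field; rewrite gt_eqF.
have h3 : F * (v * y) <= (G / tau) * (v * y) by apply: ler_wpM2r => //; rewrite mulr_ge0 // ltW.
have h4 : F * (L - eps) <= F * (v * y - phi y) by rewrite ler_pM2l //; lra.
have h5 : 0 <= (F - 1) * phi y by rewrite mulr_ge0 // subr_ge0.
have h6 : Num.min L 1 / 2 <= 1 / 2 by lra.
rewrite mulrBr Feps in h4.
rewrite mulrBr in h4.
rewrite mulrBl mul1r in h5.
lra.
Qed.
End Key.
Section MaxL.
Variables (R : realType) (d : measure_display) (T : measurableType d).

Lemma bigmax_lt_ex (F : nat -> R) x0 n c :
  c < \big[Num.max/x0]_(i < n) F i -> c < x0 \/ exists i, (i < n)%N /\ c < F i.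
Proof.
apply: (big_ind (fun v => c < v -> c < x0 \/ exists i, (i < n)%N /\ c < F i)).
- by left.
- move=> u w hu hw; rewrite lt_max => /orP[/hu|/hw] //.
- by move=> i _ h; right; exists i; split.
Qed.

Lemma mbig (Fs : nat -> T -> R) (x0 : T -> R) n :
  measurable_fun setT x0 -> (forall i, measurable_fun setT (Fs i)) ->
  measurable_fun setT (fun x => \big[Num.max/x0 x]_(i < n) Fs i x).
Proof.
move=> m0; elim: n Fs => [|n IH] Fs mF.
  rewrite (_ : (fun x => _) = x0) //; apply: funext => x; exact: big_ord0.
rewrite (_ : (fun x => _) = Fs 0%N \max (fun x => \big[Num.max/x0 x]_(i < n) Fs i.+1 x)).
  by apply: measurable_maxr => //; exact: (IH (fun i => Fs i.+1)).
by apply: funext => x; rewrite big_ord_recl /=.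
Qed.

Lemma max_array_ex (X : nat -> nat -> T -> R) m j x c : (0 < m)%N -> (0 < j)%N ->
  c < max_array X m j x -> exists k n, [/\ (k < m)%N, (n < j)%N & c < X k.+1 n.+1 x].
Proof.
move=> m0 j0; rewrite /max_array => /(@bigmax_lt_ex (fun k => \big[Num.max/X 1%N 1%N x]_(n < j) X k.+1 n.+1 x)) [h|[k [km]]].
  by exists 0%N, 0%N; split.
move=> /(@bigmax_lt_ex (fun n => X k.+1 n.+1 x)) [h|[n [nj h]]].
  by exists 0%N, 0%N; split.
by exists k, n; split.
Qed.

Lemma max_array_m (X : nat -> nat -> T -> R) m j :
  (forall k n, measurable_fun setT (X k n)) -> measurable_fun setT (max_array X m j).
Proof.
move=> mX; rewrite /max_array.
apply: (@mbig (fun k x => \big[Num.max/X 1%N 1%N x]_(n < j) X k.+1 n.+1 x)) => // i.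
exact: (@mbig (fun n x => X i.+1 n.+1 x)).
Qed.
End MaxL.

Section Extra.
Variable R : realType.
Local Open Scope ereal_scope.
Lemma lee_nneseriesN (u v : nat -> \bar R) N :
  (forall i, (N <= i)%N -> 0 <= u i) -> (forall i, (N <= i)%N -> u i <= v i) ->
  \sum_(N <= i <oo) u i <= \sum_(N <= i <oo) v i.
Proof.
move=> u0 uv; apply: lee_lim.
- by apply: is_cvg_nneseries => n Nn _; exact: u0.
- by apply: is_cvg_nneseries => n Nn _; apply: le_trans (u0 n Nn) (uv n Nn).
- apply: nearW => n; rewrite big_nat_cond [X in _ <= X]big_nat_cond.
  by apply: lee_sum => i /andP[/andP[Ni _] _]; exact: uv.
Qed.
End Extra.

Theorem corollary3 (R : realType) (d : measure_display) (T : measurableType d)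
  (P : probability T R) (phi : R -> R) (psi_inv : R -> R)
  (X : nat -> nat -> {RV P >-> R}) (g f : R -> R) (c0 alpha : R) :
  N_function phi ->
  (forall u, 0 <= u -> 0 <= psi_inv u /\ young_fenchel phi (psi_inv u) = u) ->
  (forall k n, (1 <= k)%N -> (1 <= n)%N -> phi_subgaussian P phi (X k n)) ->
  (forall x, 0 < g x) ->
  (forall x y, x <= y -> g x <= g y) ->
  (forall x, 0 < f x) ->
  (forall m j k n, (1 <= k <= m)%N -> (1 <= n <= j)%N ->
     g (ln (m * j)%:R) / tau_phi P phi (X k n) >= f ((m * j)%:R / (k * n)%:R) /\
     f ((m * j)%:R / (k * n)%:R) >= 1) ->
  0 < c0 ->
  (forall x, 1 <= x -> f x >= c0) ->
  2 - c0 < alpha ->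
  let a := fun m j : nat => g (ln (m * j)%:R) * psi_inv (ln (m * j)%:R) in
  let Y := fun (m j : nat) (x : T) =>
             max_array (fun k n => (X k n : T -> R)) m j x - a m j in
  ((\sum_(1 <= m <oo) \sum_(1 <= j <oo)
      (((m * j)%:R `^ (- alpha))%:E * P [set x | (0 < Num.max (Y m j x) 0)%R]))
   < +oo)%E.
Proof.
move=> Nphi hpsi hsub0 g0 gmono f0 hfg c00 fc0 halpha.
cbv zeta.
have phi0 : forall x, 0 <= phi x.
  case: Nphi => _ [ev [conv [p00 _]]] x.
  have h12 : 0 <= 1 / 2 :> R by lra.
  have h12' : 1 / 2 <= 1 :> R by lra.
  have h := conv x (- x) (1 / 2) h12 h12'.
  have e : 1 / 2 * x + (1 - 1 / 2) * - x = 0 by field.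
  rewrite e p00 ev in h; lra.
pose s := alpha + c0 - 1.
have s1 : 1 < s by rewrite /s; lra.
pose u (n : nat) := expR (- s * ln (n%:R : R)).
have term : forall m j, (1 <= m)%N -> (1 <= j)%N ->
  (((m * j)%:R `^ (- alpha))%:E * P [set x | (0 < Num.max (max_array (fun k n1 : nat => X k n1) m j x - g (ln (m * j)%:R) * psi_inv (ln (m * j)%:R)) 0)%R] <= (expR 1 * u m * u j)%:E)%E.
  move=> m j m1 j1.
  set M := max_array (fun k n1 : nat => X k n1) m j.
  have mM : measurable_fun setT M.
    by apply: max_array_m => k n; exact: measurable_funP.
  have mB : forall c : R, measurable [set x | (0 < Num.max (M x - c) 0)%R].
    move=> c.
    have -> : [set x | (0 < Num.max (M x - c) 0)%R] = ~` (setT `&` [set x | M x <= (fun=> c) x]).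
      apply/seteqP; split => x /=.
      - rewrite lt_max ltxx orbF subr_gt0 => h [_ h'].
        by move: h; rewrite ltNge h'.
      - move=> h; rewrite lt_max ltxx orbF subr_gt0 ltNge; apply/negP => h'; exact: h.
    apply: measurableC; apply: measurable_fun_le => //; exact: measurable_cst.
  have mj0 : (0 < m * j)%N by rewrite muln_gt0 m1 j1.
  have powE : (m * j)%:R `^ (- alpha) = expR (- alpha * ln ((m * j)%:R : R)) :> R.
    by rewrite /powR ifF //; apply/negbTE; rewrite pnatr_eq0 -lt0n.
  rewrite powE.
  case: (ltnP 1 (m * j)) => hmj; last first.
    have [em ej] : m = 1%N /\ j = 1%N by lia.
    subst m j; rewrite /u !mul1n ln1 !mulr0 expR0 mul1e mulr1.
    apply: (le_trans (probability_le1 P (mB _))).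
    by rewrite lee_fin mulr1; have := expR_ge1Dx (1:R); lra.
  set L := ln ((m * j)%:R : R).
  have L0 : 0 < L by rewrite /L ln_gt0 // ltr1n.
  set aa := g L * psi_inv L.
  pose A := fun i : nat => [set x | (aa <= X (i %/ j).+1 (i %% j).+1 x)%R].
  have mA : forall i, measurable (A i).
    move=> i; rewrite -[A i]setTI.
    apply: (@measurable_fun_le d T R setT (fun=> aa) (X (i %/ j).+1 (i %% j).+1)) => //; exact: measurable_funP.
  have hsub : [set x | (0 < Num.max (M x - aa) 0)%R] `<=` \big[setU/set0]_(i < m * j) A i.
    move=> x /=; rewrite lt_max ltxx orbF subr_gt0.
    move=> /(@max_array_ex R d T _ m j x aa m1 j1) [k [n [km nj h]]].
    rewrite -bigcup_mkord; exists (k * j + n)%N; first by rewrite /=; nia.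
    rewrite /A /= divnMDl ?divn_small // ?addn0 ?modnMDl ?modn_small //.
    exact: ltW.
  have hP : (P [set x | (0 < Num.max (M x - aa) 0)%R] <= \sum_(i < m * j) P (A i))%E.
    apply: (le_trans (le_measure _ _ _ hsub)).
    - by rewrite inE; exact: mB.
    - by rewrite inE; apply: bigsetU_measurable => i _; exact: mA.
    - exact: Boole_inequality.
  have hAi : forall i, (i < m * j)%N -> (P (A i) <= (expR (1 - c0 * L))%:E)%E.
    move=> i hi.
    have kn : (i %/ j < m)%N by rewrite ltn_divLR // lt0n; lia.
    have nj : (i %% j < j)%N by rewrite ltn_pmod.
    have [hF1 hF2] := hfg m j (i %/ j).+1 (i %% j).+1 kn nj.
    have [v0 yf] := hpsi L (ltW L0).
    have hk := @key R d T P phi (X (i %/ j).+1 (i %% j).+1) (g L) (psi_inv L) L _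
       phi0 (hsub0 (i %/ j).+1 (i %% j).+1 isT isT) yf L0 v0 hF2 hF1 (g0 L).
    rewrite /A; apply: (le_trans hk).
    rewrite lee_fin ler_expR lerD2l lerN2.
    apply: ler_wpM2r; first exact: ltW.
    apply: fc0.
    rewrite ler_pdivlMr ?ltr0n ?muln_gt0 // mul1r ler_nat.
    exact: leq_mul.
  have hS : (\sum_(i < m * j) P (A i) <= ((m * j)%:R * expR (1 - c0 * L))%:E)%E.
    apply: le_trans.
      by apply: lee_sum => i _; exact: (hAi _ (ltn_ord i)).
    rewrite (_ : (\sum_(i < m * j) (expR (1 - c0 * L))%:E)%E = (\sum_(i < m * j) expR (1 - c0 * L))%:E); last by rewrite sumEFin.
    by rewrite lee_fin sumr_const card_ord mulr_natl.
  apply: (le_trans (lee_wpmul2l _ (le_trans hP hS))); first by rewrite lee_fin expR_ge0.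
  rewrite -EFinM lee_fin.
  have -> : (m * j)%:R = expR L :> R by rewrite /L lnK // posrE ltr0n.
  rewrite /u -!expRD ler_expR /L natrM lnM ?posrE ?ltr0n //.
  by rewrite le_eqVlt; apply/orP; left; apply/eqP; rewrite /s; ring.
have Zfin := @pseries_fin R s s1.
set Z := (\sum_(1 <= n <oo) (expR (- s * ln n%:R))%:E)%E in Zfin.
have Z0 : (0 <= Z)%E by apply: nneseries_ge0 => n _ _; rewrite lee_fin expR_ge0.
have [z zE] : exists z, Z = z%:E by exists (fine Z); rewrite fineK // ge0_fin_numE.
have inner : forall m, (\sum_(1 <= j <oo) (expR 1 * u m * u j)%:E = (expR 1 * u m * z)%:E)%E.
  move=> m.
  transitivity (\sum_(1 <= j <oo) ((expR 1 * u m)%:E * (u j)%:E))%E.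
    by apply: eq_eseriesr => i _; rewrite EFinM.
  rewrite nneseriesZl; last by move=> i _; rewrite lee_fin expR_ge0.
  by rewrite -/Z zE -EFinM.
apply: (le_lt_trans (@lee_nneseriesN R _ (fun m => \sum_(1 <= j <oo) (expR 1 * u m * u j)%:E)%E 1 _ _)).
- move=> m _; apply: nneseries_ge0 => j _ _.
  by apply: mule_ge0; [rewrite lee_fin powR_ge0 | exact: measure_ge0].
- move=> m m1; apply: lee_nneseriesN => j j1.
    by apply: mule_ge0; [rewrite lee_fin powR_ge0 | exact: measure_ge0].
  exact: term.
rewrite (eq_eseriesr (g := fun m => ((expR 1 * z)%:E * (u m)%:E)%E)); last first.
  by move=> m _; rewrite inner -EFinM; congr (_%:E); ring.
rewrite nneseriesZl; last by move=> i _; rewrite lee_fin expR_ge0.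
by rewrite -/Z zE -EFinM ltey.
Qed.
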